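(* For every integer $n \geq 1$, the complete bipartite graphs $K_{2,n}$ and $K_{3,n}$ are stable, i.e., all roots of their independence polynomials lie in the closed left half-plane $\{z \in \mathbb{C} : \mathrm{Re}(z) \leq 0\}$.
   Context: For a simple graph $G$, the independence polynomial is $i(G,x)=\sum_{k=0}^{\alpha(G)} i_k(G)x^k$, where $i_k(G)$ is the number of independent sets of size $k$ in $G$ (with $i_0(G)=1$) and $\alpha(G)$ is the independence number. A graph $G$ is called stable if every root $z$ of $i(G,x)$ satisfies $\mathrm{Re}(z)\leq 0$. For the complete bipartite graph $K_{m,n}$ one has $i(K_{m,n},x)=(1+x)^n+(1+x)^m-1$. *)

(* Defs.v *)
From HB Require Import structures.
From mathcomp Require Import all_boot all_order all_algebra all_field.
Set Implicit Arguments. Unset Strict Implicit. Unset Printing Implicit Defensive.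
Import Order.TTheory GRing.Theory Num.Theory.
Local Open Scope ring_scope.

(* A simple graph on a finite vertex type T is given by an edge relation e
   (assumed symmetric and irreflexive where relevant). *)

Definition independent (T : finType) (e : rel T) (A : {set T}) : bool :=
  [forall x in A, forall y in A, ~~ e x y].

Definition indep_poly (T : finType) (e : rel T) : {poly algC} :=
  \sum_(A : {set T} | independent e A) 'X^#|A|.

Definition stable (T : finType) (e : rel T) : Prop :=
  forall z : algC, root (indep_poly e) z -> 'Re z <= 0.

Definition Kbip_edge (m n : nat) : rel ('I_m + 'I_n)%type :=
  fun x y =>
    match x, y with
    | inl _, inr _ => true
    | inr _, inl _ => true
    | _, _ => false
    end.
Arguments Kbip_edge m n : clear implicits.

(* Main.v *)
Require Import Defs.
From mathcomp Require Import all_boot all_order all_algebra all_field.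
From mathcomp Require Import ring lra.
Import Order.TTheory GRing.Theory Num.Theory.
Local Open Scope ring_scope.

Lemma I2 (R : realFieldType) (x P : R) : x^+2 <= P -> P < x -> P * ((P - 2*x + 1) * (P + 2*x + 1)) < 1.
Proof. move=> h1 h2.
have P0 : 0 <= P by apply: le_trans h1; exact: sqr_ge0.
have h3 : P^+2 < x^+2.
  have : 0 < (x-P)*(x+P) by apply: mulr_gt0; lra.
  nra.
have h4 : P * ((P - 2*x + 1) * (P + 2*x + 1)) <= P * ((P+1)^+2 - 4 * P^+2).
  have -> : P * ((P - 2*x + 1) * (P + 2*x + 1)) = P * ((P+1)^+2 - 4 * x^+2) by ring.
  apply: ler_wpM2l => //; lra.
apply: le_lt_trans h4 _.
have h5: 0 <= P * (P - 1/2)^+2 by apply: mulr_ge0 => //; exact: sqr_ge0.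
nra. Qed.
Lemma I3 (R : realFieldType) (x P : R) : x^+2 <= P -> P < x -> P^+2 * (P^+3 - 8*x^+3 + 6*x*P + 1) < 1.
Proof. move=> h1 h2.
have P0 : 0 <= P by apply: le_trans h1; exact: sqr_ge0.
have x1 : x <= 1 by nra.
have [Ps|Pl] := ltP P (1/4).
  have x2 : x < 1/2 by nra.
  have h: P^+3 - 8*x^+3 + 6*x*P + 1 <= 3 by nra.
  nra.
have h: 8*x^+3 - 6*x*P >= 8*P^+3 - 6*P*P.
  rewrite -subr_ge0.
  have -> : 8*x^+3 - 6*x*P - (8*P^+3 - 6*P*P) = (x - P) * (8*(x^+2 + x*P + P^+2) - 6*P) by ring.
  apply: mulr_ge0; nra.
have h': P^+2 * (P^+3 - 8*x^+3 + 6*x*P + 1) <= P^+2 * (P^+3 - 8*P^+3 + 6*P*P + 1).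
  apply: ler_wpM2l; [exact: sqr_ge0| lra].
apply: le_lt_trans h' _.
have P1 : P < 1 by lra.
have a1 : 0 <= (1 - P) * (P - 3/4)^+2 by apply: mulr_ge0; [lra| exact: sqr_ge0].
have a2 : 0 <= P * (1 - P) * (P - 3/4)^+2 by apply: mulr_ge0; [nra| exact: sqr_ge0].
have a3 : 0 <= P^+2 * (1 - P) * (P - 3/4)^+2 by apply: mulr_ge0; [apply: mulr_ge0; [exact: sqr_ge0|lra]| exact: sqr_ge0].
nra. Qed.
Lemma leR (a b : algR) : (a <= b) = (algRval a <= algRval b). Proof. by []. Qed.
Lemma ltR (a b : algR) : (a < b) = (algRval a < algRval b). Proof. by []. Qed.
Lemma T1 {x P : algC} (xR : x \is Creal) (PR : P \is Creal) : x^+2 <= P -> P < x -> P - 2*x + 1 < 1.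
Proof.
move=> h1 h2.
have I1 : forall (x P : algR), x^+2 <= P -> P < x -> P - 2*x + 1 < 1.
  move=> x' P' h1' h2'. have : 0 <= x'^+2 by exact: sqr_ge0. nra.
have := I1 (in_algR xR) (in_algR PR).
rewrite !leR !ltR !(rmorphM, rmorphD, rmorphB, rmorphXn, rmorph1, rmorph_nat) /=.
by apply.
Qed.
Lemma T2 {x P : algC} (xR : x \is Creal) (PR : P \is Creal) : x^+2 <= P -> P < x -> P * ((P - 2*x + 1) * (P + 2*x + 1)) < 1.
Proof.
move=> h1 h2.
have := @I2 algR (in_algR xR) (in_algR PR).
rewrite !leR !ltR !(rmorphM, rmorphD, rmorphB, rmorphXn, rmorph1, rmorph_nat) /=.
by apply.
Qed.
Lemma T3 {x P : algC} (xR : x \is Creal) (PR : P \is Creal) : x^+2 <= P -> P < x -> P^+2 * (P^+3 - 8*x^+3 + 6*x*P + 1) < 1.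
Proof.
move=> h1 h2.
have := @I3 algR (in_algR xR) (in_algR PR).
rewrite !leR !ltR !(rmorphM, rmorphD, rmorphB, rmorphXn, rmorph1, rmorph_nat) /=.
by apply.
Qed.
Lemma key (w : algC) (a k : nat) : 1 < 'Re w -> (0 < a)%N -> (a <= 3)%N ->
  w^+a * (1 + w^+k) != 1.
Proof.
move=> Rw a0 a3; apply/negP => /eqP H.
have r1 : 1 < `|w| := lt_le_trans Rw (leif_Re_Creal w).1.
have w0 : w != 0 by apply: contraTneq r1 => ->; rewrite normr0 ltr10.
set v := w^-1.
have vw : v * w = 1 by rewrite mulVf.
have E : w^+k = v^+a - 1.
  have : v^+a = 1 + w^+k.
    by rewrite -[v^+a]mulr1 -{1}H mulrA -exprMn vw expr1n mul1r.
  by move=> ->; rewrite addrAC subrr add0r.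
have N : `|v^+a - 1| ^+ 2 = `|w|^+(k * 2).
  by rewrite -E normrX exprM.
set c := v^*.
set x := 'Re v.
set P := `|v|^+2.
have xR : x \is Creal by apply: Creal_Re.
have PR : P \is Creal by apply: rpredX; apply: normr_real.
have hP : P = v * c by rewrite /P normCK.
have hx : x * 2 = v + c by rewrite /x ReE mulfVK // pnatr_eq0.
have P0 : 0 < P by rewrite exprn_gt0 // normr_gt0 invr_eq0.
have Pw : P * `|w|^+2 = 1 by rewrite /P -exprMn -normrM vw normr1 expr1n.
have xP : x = 'Re w * P by rewrite /x /v ReV /P normfV exprVn.
have h2 : P < x by rewrite xP ltr_pMl.
have h1 : x^+2 <= P.
  rewrite /P normC2_Re_Im -/x lerDl -real_normK ?exprn_ge0 //.
have v1 : `|v| < 1 by rewrite /v normfV invf_lt1 // (lt_trans ltr01 r1).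
have [k0|kpos] := posnP k.
  move: E; rewrite k0 expr0 => /eqP; rewrite eq_sym subr_eq => /eqP e2.
  have := exprn_ile1 a (normr_ge0 v) (ltW v1).
  by rewrite -normrX e2 ger0_norm ?addr_ge0 ?ler01 // gerDl ler10.
have wk : forall j, (j <= k)%N -> `|w|^+(j*2) <= `|w|^+(k*2).
  by move=> j jk; rewrite ler_eXn2l // leq_mul2r jk orbT.
have nc : forall u : algC, `|u - 1|^+2 = (u - 1) * (u^* - 1).
  by move=> u; rewrite normCK rmorphB rmorph1.
case: a a0 a3 H E N => [|[|[|[|a]]]] //= _ _ H E N.
-
  have := T1 xR PR h1 h2.
  have -> : P - 2 * x + 1 = `|w| ^+ (k * 2).
    rewrite -N expr1 nc -/c hP [2 * x]mulrC hx; ring.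
  move=> lt1; suff: (1 < 1 :> algC) by rewrite ltxx.
  apply: le_lt_trans lt1.
  by apply: ltW; rewrite exprn_egt1 //; case: (k) kpos.
-
  have := T2 xR PR h1 h2.
  have -> : P * ((P - 2*x + 1) * (P + 2*x + 1)) = P * `|w| ^+ (k * 2).
    rewrite -N nc rmorphXn -/c.
    have -> : (P - 2*x + 1) * (P + 2*x + 1) = (P+1)^+2 - (x*2)^+2 by ring.
    rewrite hx hP; ring.
  move=> lt1; suff: (1 < 1 :> algC) by rewrite ltxx.
  apply: le_lt_trans lt1.
  by rewrite -Pw ler_wpM2l ?(ltW P0) // (wk 1%N).
-
  have [k1|k2] := eqVneq k 1%N.
    move: E; rewrite k1 expr1 => /eqP; rewrite eq_sym subr_eq addrC => /eqP e3.
    have : `|1 + w| <= 1.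
      by rewrite -e3 normrX exprn_ile1 ?normr_ge0 ?(ltW v1).
    move=> le1; suff: (1 < 1 :> algC) by rewrite ltxx.
    apply: lt_le_trans le1.
    apply: lt_le_trans (leif_Re_Creal _).1.
    rewrite raddfD /= (Creal_ReP _ (rpred1 _)) ltrDl.
    exact: lt_trans ltr01 Rw.
  have := T3 xR PR h1 h2.
  have -> : P^+2 * (P^+3 - 8*x^+3 + 6*x*P + 1) = P^+2 * `|w| ^+ (k * 2).
    rewrite -N nc rmorphXn -/c.
    have -> : P^+3 - 8*x^+3 + 6*x*P + 1 = P^+3 - (x*2)^+3 + 3*(x*2)*P + 1 by ring.
    rewrite hx hP; ring.
  move=> lt1; suff: (1 < 1 :> algC) by rewrite ltxx.
  apply: le_lt_trans lt1.
  have -> : 1 = P^+2 * `|w|^+(2*2) by rewrite exprM -exprMn Pw expr1n.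
  rewrite ler_wpM2l ?exprn_ge0 ?(ltW P0) // (wk 2%N) //.
  by rewrite ltn_neqAle eq_sym k2 kpos.
Qed.
Set Implicit Arguments. Unset Strict Implicit. Unset Printing Implicit Defensive.
Lemma indepE m n (A : {set ('I_m + 'I_n)%type}) :
  independent (Kbip_edge m n) A =
  (A \subset [set x | if x is inl _ then true else false])
  || (A \subset ~: [set x | if x is inl _ then true else false]).
Proof.
apply/idP/idP.
  move=> /forallP H.
  case: (boolP (A \subset _)) => //= /subsetPn [x xA].
  rewrite inE; case: x xA => // j jA _.
  apply/subsetP => y yA; rewrite !inE.
  case: y yA => // i iA.
  have := H (inr j); rewrite jA /= => /forallP /(_ (inl i)).
  by rewrite iA.
case/orP => sub; apply/forallP => x; apply/implyP => xA; apply/forallP => y;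
  apply/implyP => yA.
  have := subsetP sub x xA; have := subsetP sub y yA.
  by case: x {xA} => [i|j]; case: y {yA} => [i'|j']; rewrite !inE.
have := subsetP sub x xA; have := subsetP sub y yA.
by case: x {xA} => [i|j]; case: y {yA} => [i'|j']; rewrite !inE.
Qed.
Lemma sum_subset (T : finType) (S : {set T}) :
  \sum_(A : {set T} | A \subset S) ('X^#|A| : {poly algC}) = ('X + 1)^+#|S|.
Proof.
rewrite -prodr_const [RHS]big_mkcond /=.
have -> : \prod_(i : T) (if i \in S then ('X : {poly algC}) + 1 else 1)
   = \prod_(i : T) ((if i \in S then 'X else 0) + 1).
  by apply: eq_bigr => i _; case: (i \in S); rewrite ?add0r.
rewrite bigA_distr [LHS]big_mkcond /=.
apply: eq_bigr => J _.
case: ifP => JS.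
  rewrite -(prodr_const (mem J) 'X) [LHS]big_mkcond /=.
  apply: eq_bigr => i _; case: ifP => // iJ.
  by rewrite (subsetP JS i iJ).
have [i iJ iS] : exists2 i, i \in J & i \notin S.
  by move/negbT: JS => /subsetPn [i iJ iS]; exists i.
by rewrite (bigD1 i) //= iJ (negbTE iS) mul0r.
Qed.

Lemma indep_Kbip m n :
  indep_poly (Kbip_edge m n) = ('X + 1)^+m + ('X + 1)^+n - 1.
Proof.
set L : {set ('I_m + 'I_n)%type} := [set x | if x is inl _ then true else false].
have cL : #|L| = m.
  have -> : L = inl @: [set: 'I_m].
    apply/setP => -[i|j]; rewrite !inE.
      by apply/esym/imsetP; exists i; rewrite ?inE.
    by apply/esym/imsetP => -[i _].
  by rewrite card_imset ?cardsT ?card_ord // => x y [].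
have cR : #|~: L| = n by rewrite cardsCs setCK card_sum !card_ord cL addKn.
rewrite /indep_poly (eq_bigl _ _ (@indepE m n)) -/L.
rewrite (bigID (fun A : {set ('I_m + 'I_n)%type} => A \subset L)) /=.
rewrite (eq_bigl (fun A : {set ('I_m + 'I_n)%type} => A \subset L));
  last by rewrite /eqfun => A; case: (A \subset L) => //=; rewrite ?andbT ?andbF.
rewrite [X in _ + X = _](eq_bigl (fun A : {set ('I_m + 'I_n)%type} => (A \subset ~: L) && ~~ (A \subset L))); last first.
  by rewrite /eqfun => A; case: (A \subset L) => //=; rewrite ?andbT ?andbF.
rewrite sum_subset cL -[in RHS]cR -(sum_subset (~: L)).
rewrite [in RHS](bigID (fun A : {set ('I_m + 'I_n)%type} => A \subset L)) /=.
rewrite [in RHS](big_pred1 set0); last first.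
  move=> A /=; apply/andP/eqP => [[h1 h2]|->]; last by rewrite !sub0set.
  apply/setP => x; rewrite inE; apply/negbTE/negP => xA.
  by have := subsetP h1 x xA; rewrite inE (subsetP h2 x xA).
by rewrite cards0 expr0 [1 + _]addrC addrA addrK.
Qed.

Lemma stab m n : (0 < m)%N -> (m <= 3)%N -> (0 < n)%N -> stable (Kbip_edge m n).
Proof.
move=> m0 m3 n0 z; rewrite /root indep_Kbip !hornerE => /eqP Hz.
rewrite real_leNgt ?Creal_Re ?rpred0 //; apply/negP => Rz.
set w := z + 1 in Hz.
have Rw : 1 < 'Re w.
  rewrite /w raddfD /= (Creal_ReP _ (rpred1 _)) ltrDr //.
have Hw : w^+m + w^+n = 1 by move/eqP: Hz; rewrite subr_eq0 => /eqP.
have [mn|nm] := leqP m n.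
  have := key w m (n - m)%N Rw m0 m3; rewrite mulrDr mulr1 -exprD subnKC //.
  by rewrite Hw eqxx.
have n3 : (n <= 3)%N by apply: leq_trans (ltnW nm) m3.
have := key w n (m - n)%N Rw n0 n3; rewrite mulrDr mulr1 -exprD subnKC ?(ltnW nm) //.
by rewrite addrC Hw eqxx.
Qed.

Theorem theorem2 (n : nat) : (1 <= n)%N ->
  stable (Kbip_edge 2 n) /\ stable (Kbip_edge 3 n).
Proof. by move=> n1; split; apply: stab. Qed.
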